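(* Let $L:\mathbb{R}^n\to\mathbb{R}$ be $\mathcal{C}^1$, convex, with a unique minimizer $z_1^*$ ($L^*=L(z_1^* )$), and with $\nabla L$ Lipschitz with constant $M>0$. Let $\zeta>0$, $\bar d(t)=\frac{3}{2(t+2)}$, $\bar\beta(t)=\frac{t-1}{t+2}$. Then for every $\varepsilon>0$ and every compact set $K\subset\mathbb{R}^{2n}$ there exists $t^*>0$ such that every maximal solution $t\mapsto(z(t),\tau(t))$ of $\dot z_1=z_2$, $\dot z_2=-2\bar d(\tau)z_2-\frac{\zeta^2}{M}\nabla L(z_1+\bar\beta(\tau)z_2)$, $\dot\tau=1$ on $\mathbb{R}^{2n}\times\mathbb{R}_{\ge0}$ with $(z(0),\tau(0))\in K\times\{0\}$ satisfies $$\frac{\zeta^2}{M}(L(z_1(t))-L^* )\le\varepsilon\quad\text{for all }t\ge t^*.$$ *)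

(* Defs.v *)
From HB Require Import structures.
From mathcomp Require Import all_boot all_order all_algebra.
From mathcomp Require Import all_classical all_reals all_analysis.
Set Implicit Arguments. Unset Strict Implicit. Unset Printing Implicit Defensive.
Import Order.TTheory GRing.Theory Num.Theory.
Import numFieldNormedType.Exports.
Local Open Scope classical_set_scope.
Local Open Scope ring_scope.

Definition dotv {R : realType} {n : nat} (u v : 'rV[R]_n) : R :=
  \sum_(i < n) u ord0 i * v ord0 i.

(* Euclidean norm on R^n (MathComp's default norm on matrices is the sup norm). *)
Definition enorm {R : realType} {n : nat} (u : 'rV[R]_n) : R :=
  Num.sqrt (dotv u u).

Definition is_gradient {R : realType} {n : nat}
  (L : 'rV[R]_n -> R) (g : 'rV[R]_n -> 'rV[R]_n) : Prop :=
  forall x, differentiable L x /\ forall h, 'd L x h = dotv (g x) h.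

Definition convex_fun {R : realType} {n : nat} (L : 'rV[R]_n -> R) : Prop :=
  forall (x y : 'rV[R]_n) (l : R), 0 <= l <= 1 ->
    L (l *: x + (1 - l) *: y) <= l * L x + (1 - l) * L y.

Definition unique_minimizer {R : realType} {n : nat}
  (L : 'rV[R]_n -> R) (zs : 'rV[R]_n) : Prop :=
  (forall x, L zs <= L x) /\ (forall y, (forall x, L y <= L x) -> y = zs).

Definition lipschitz_euclid {R : realType} {n : nat}
  (g : 'rV[R]_n -> 'rV[R]_n) (M : R) : Prop :=
  forall x y, enorm (g x - g y) <= M * enorm (x - y).

Definition dbar {R : realType} (t : R) : R := 3 / (2 * (t + 2)).
Definition betabar {R : realType} (t : R) : R := (t - 1) / (t + 2).

Definition is_sol {R : realType} {n : nat} (gradL : 'rV[R]_n -> 'rV[R]_n)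
  (zeta M : R) (T : \bar R)
  (z1 z2 : R -> 'rV[R]_n) (tau : R -> R) : Prop :=
  (0 < T)%E /\
  (forall t, 0 <= t -> (t%:E < T)%E -> 0 <= tau t) /\
  (* right-continuity at the initial time 0 (continuity on (0,T) follows
     from differentiability there) *)
  [/\ z1 s @[s --> 0^'+] --> z1 0, z2 s @[s --> 0^'+] --> z2 0
     & tau s @[s --> 0^'+] --> tau 0] /\
  (forall t, 0 < t -> (t%:E < T)%E ->
     [/\ is_derive t 1 z1 (z2 t),
         is_derive t 1 z2
           (- (2 * dbar (tau t)) *: z2 t
            - (zeta ^+ 2 / M) *: gradL (z1 t + betabar (tau t) *: z2 t))
       & is_derive t 1 tau 1]).

Definition is_maximal_sol {R : realType} {n : nat} (gradL : 'rV[R]_n -> 'rV[R]_n)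
  (zeta M : R) (T : \bar R)
  (z1 z2 : R -> 'rV[R]_n) (tau : R -> R) : Prop :=
  is_sol gradL zeta M T z1 z2 tau /\
  forall (T' : \bar R) (w1 w2 : R -> 'rV[R]_n) (s : R -> R),
    is_sol gradL zeta M T' w1 w2 s ->
    (forall t, 0 <= t -> (t%:E < T)%E ->
        [/\ w1 t = z1 t, w2 t = z2 t & s t = tau t]) ->
    (T' <= T)%E.

(* Main.v *)
Require Import Defs.
From HB Require Import structures.
From mathcomp Require Import all_boot all_order all_algebra.
From mathcomp Require Import all_classical all_reals all_analysis.
From mathcomp Require Import lra ring.
Import Order.TTheory GRing.Theory Num.Theory.
Import numFieldNormedType.Exports.
Local Open Scope classical_set_scope.
Local Open Scope ring_scope.

Section Dot.
Context {R : realType} {n : nat}.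
Implicit Types u v w : 'rV[R]_n.

Lemma dotvC u v : dotv u v = dotv v u.
Proof. by apply: eq_bigr => i _; rewrite mulrC. Qed.
Lemma dotvDl u v w : dotv (u + v) w = dotv u w + dotv v w.
Proof. by rewrite /dotv -big_split; apply: eq_bigr => i _; rewrite mxE mulrDl. Qed.
Lemma dotvDr u v w : dotv w (u + v) = dotv w u + dotv w v.
Proof. by rewrite dotvC dotvDl !(dotvC w). Qed.
Lemma dotvZl (a : R) u v : dotv (a *: u) v = a * dotv u v.
Proof. by rewrite /dotv mulr_sumr; apply: eq_bigr => i _; rewrite mxE mulrA. Qed.
Lemma dotvZr (a : R) u v : dotv u (a *: v) = a * dotv u v.
Proof. by rewrite dotvC dotvZl dotvC. Qed.
Lemma dotvNl u v : dotv (- u) v = - dotv u v.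
Proof. by rewrite -scaleN1r dotvZl mulN1r. Qed.
Lemma dotvNr u v : dotv u (- v) = - dotv u v.
Proof. by rewrite dotvC dotvNl dotvC. Qed.
Lemma dotvBl u v w : dotv (u - v) w = dotv u w - dotv v w.
Proof. by rewrite dotvDl dotvNl. Qed.
Lemma dotvBr u v w : dotv w (u - v) = dotv w u - dotv w v.
Proof. by rewrite dotvDr dotvNr. Qed.
Lemma dotv_ge0 u : 0 <= dotv u u.
Proof. by apply: sumr_ge0 => i _; rewrite -expr2 sqr_ge0. Qed.
Lemma dotv_le u v : 2 * dotv u v <= dotv u u + dotv v v.
Proof.
have := dotv_ge0 (u - v); rewrite dotvBl !dotvBr (dotvC v u).
rewrite subr_ge0 => H; rewrite -subr_ge0; move: (dotv_ge0 (u - v)).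
rewrite dotvBl !dotvBr (dotvC v u); lra.
Qed.
Lemma dotvD_le u v : dotv (u + v) (u + v) <= 2 * dotv u u + 2 * dotv v v.
Proof.
rewrite dotvDl !dotvDr (dotvC v u); have := dotv_le u v; lra.
Qed.
End Dot.

Section Grad.
Context {R : realType} {n : nat} (L : 'rV[R]_n -> R) (g : 'rV[R]_n -> 'rV[R]_n).
Hypothesis hgrad : is_gradient L g.
Hypothesis hconv : convex_fun L.

Lemma grad_ineq x y : L x + dotv (g x) (y - x) <= L y.
Proof.
set h := y - x.
have [dL dLe] := hgrad x.
have der : derivable L x h by exact: diff_derivable.
have E : 'D_h L x = dotv (g x) h by rewrite deriveE // dLe.
have lim0 : (fun l : R => l^-1 *: (L (l *: h + x) - L x)) @ 0^' --> dotv (g x) h.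
  rewrite -E; exact: der.
have limr : (fun l : R => l^-1 *: (L (l *: h + x) - L x)) @ 0^'+ --> dotv (g x) h.
  apply: cvg_trans lim0 => A [e /= e0 HA]; exists e => // z ze z0.
  by apply: HA => //; rewrite gt_eqF.
rewrite -lerBrDl; apply: (cvgr_to_le limr).
near=> l.
have l0 : 0 < l by near: l; exact: nbhs_right_gt.
have l1 : l < 1 by near: l; exact: nbhs_right_lt.
have H0 : 0 <= l <= 1 by rewrite !ltW.
have := @hconv y x l H0.
have -> : l *: y + (1 - l) *: x = l *: h + x.
  by rewrite /h scalerBr scalerBl scale1r addrCA addrC.
move=> H; rewrite /GRing.scale /= -(ler_pM2l l0) mulrA mulrV ?unitfE ?gt_eqF // mul1r.
lra.
Unshelve. all: by end_near.
Qed.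

Lemma grad_mono x y : 0 <= dotv (g x - g y) (x - y).
Proof.
have := grad_ineq x y; have := grad_ineq y x.
rewrite -[y - x]opprB dotvNr dotvBl; lra.
Qed.
End Grad.
Section Deriv.
Context {R : realType} {n : nat}.

Lemma is_derive_coord (f : R -> 'rV[R]_n) (t : R) (D : 'rV[R]_n) (i : 'I_n) :
  is_derive t 1 f D -> is_derive t (1:R) (fun s => f s ord0 i) (D ord0 i).
Proof.
case=> df <-.
have dfi : derivable (fun s => f s ord0 i) t 1 by move/derivable_mxP: df; apply.
apply: DeriveDef => //.
by rewrite derive_mx // mxE.
Qed.

Lemma is_derive_dotv (f h : R -> 'rV[R]_n) (t : R) (Df Dh : 'rV[R]_n) :
  is_derive t 1 f Df -> is_derive t 1 h Dh ->
  is_derive t (1:R) (fun s => dotv (f s) (h s)) (dotv Df (h t) + dotv (f t) Dh).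
Proof.
move=> df dh.
have -> : (fun s => dotv (f s) (h s)) =
   \sum_(i < n) (fun s => f s ord0 i * h s ord0 i).
  by apply/funext => s; rewrite /dotv fct_sumE.
have -> : dotv Df (h t) + dotv (f t) Dh =
   \sum_(i < n) (f t ord0 i *: Dh ord0 i + h t ord0 i *: Df ord0 i).
  rewrite /dotv -big_split /=; apply: eq_bigr => i _.
  rewrite /GRing.scale /= addrC; congr (_ + _); by rewrite mulrC.
apply: is_derive_sum => i.
have H := is_deriveM (@is_derive_coord _ _ _ i df) (@is_derive_coord _ _ _ i dh).
exact: H.
Qed.

Context (L : 'rV[R]_n -> R) (g : 'rV[R]_n -> 'rV[R]_n).
Hypothesis hgrad : is_gradient L g.

Lemma is_derive_Lcomp (x : R -> 'rV[R]_n) (t : R) (D : 'rV[R]_n) :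
  is_derive t 1 x D -> is_derive t (1:R) (fun s => L (x s)) (dotv (g (x t)) D).
Proof.
case=> dx <-.
have dx' : differentiable x t by apply/derivable1_diffP.
have [dL dLe] := hgrad (x t).
have dc : differentiable (L \o x) t by exact: differentiable_comp.
apply: DeriveDef; first exact: diff_derivable.
rewrite (deriveE _ dc) diff_comp //= -dLe; congr ('d L (x t) _).
by rewrite deriveE.
Qed.
End Deriv.
Arguments is_derive_dotv {R n f h t Df Dh}.
Section Lim.
Context {R : realType} {n : nat}.

Lemma cvg_dotv {T : Type} (F : set_system T) {FF : Filter F} (f h : T -> 'rV[R]_n) a b :
  f @ F --> a -> h @ F --> b -> (fun x => dotv (f x) (h x)) @ F --> dotv a b.
Proof.
move=> fa hb; rewrite /dotv.
apply: cvg_big => //; first exact: add_continuous.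
move=> i _; apply: cvgM.
- exact: (continuous_cvg _ (@coord_continuous R 1 n ord0 i a) fa).
- exact: (continuous_cvg _ (@coord_continuous R 1 n ord0 i b) hb).
Qed.

Lemma nonincr (f Df : R -> R) (a b : R) : a < b ->
  f x @[x --> a^'+] --> f a ->
  (forall x, a < x <= b -> is_derive x 1 f (Df x)) ->
  (forall x, a < x < b -> Df x <= 0) -> f b <= f a.
Proof.
move=> ab fa df dle.
have cont : forall x, a < x <= b -> {for x, continuous f}.
  move=> x /df [dx _]; exact/differentiable_continuous/derivable1_diffP.
have := @ler0_derive1_le_cc R f a b.
apply.
- move=> x; rewrite in_itv /= => /andP[ax xb].
  have [] : is_derive x 1 f (Df x) by apply: df; rewrite ax ltW.
  by [].
- move=> x; rewrite in_itv /= => /andP[ax xb].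
  have [dx dv] : is_derive x 1 f (Df x) by apply: df; rewrite ax ltW.
  by rewrite derive1E dv; apply: dle; rewrite ax.
- apply/continuous_within_itvP => //; split => //.
  + move=> x; rewrite in_itv /= => /andP[ax xb]; apply: cont; rewrite ax ltW //.
  + apply: cvg_at_left_filter; apply: cont; rewrite ab lexx //.
- by rewrite in_itv /= lexx ltW.
- by rewrite in_itv /= lexx ltW.
- exact: ltW.
Qed.
End Lim.
Section Misc.
Context {R : realType} {n : nat}.

Lemma tau_id (tau : R -> R) (T : \bar R) : tau 0 = 0 ->
  tau s @[s --> 0^'+] --> tau 0 ->
  (forall t, 0 < t -> (t%:E < T)%E -> is_derive t 1 tau 1) ->
  forall t, 0 <= t -> (t%:E < T)%E -> tau t = t.
Proof.
move=> t00 tc td t; rewrite le_eqVlt => /predU1P[<- //|t0] tT.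
have dd : forall x, 0 < x <= t -> is_derive x (1:R) (fun s => tau s - s) 0.
  move=> x /andP[x0 xt].
  have xT : (x%:E < T)%E by apply: le_lt_trans tT; rewrite lee_fin.
  have := is_deriveB (td x x0 xT) (is_derive_id x (1:R)); by rewrite subrr.
have dd' : forall x, 0 < x <= t -> is_derive x (1:R) (fun s => - (tau s - s)) 0.
  move=> x /dd H; have := is_deriveN H; by rewrite oppr0.
have lim1 : (fun s => tau s - s) s @[s --> 0^'+] --> tau 0 - 0.
  apply: cvgB => //; exact: cvg_at_right_filter.
have h1 := @nonincr R _ (fun=> 0) 0 t t0 lim1 dd (fun _ _ => lexx 0).
have lim2 : (fun s => - (tau s - s)) s @[s --> 0^'+] --> - (tau 0 - 0).
  exact: cvgN.
have h2 := @nonincr R _ (fun=> 0) 0 t t0 lim2 dd' (fun _ _ => lexx 0).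
move: h1 h2; rewrite t00 /=; lra.
Qed.

Lemma compact_bound (K : set ('rV[R]_n * 'rV[R]_n)) (zs : 'rV[R]_n) :
  compact K -> exists B : R, 0 < B /\
    forall p, K p -> dotv (p.1 - zs) (p.1 - zs) + dotv p.2 p.2 <= B.
Proof.
move=> cK.
pose phi (p : 'rV[R]_n * 'rV[R]_n) := dotv (p.1 - zs) (p.1 - zs) + dotv p.2 p.2.
have cphi : continuous phi.
  move=> p; apply: cvgD.
  - apply: cvg_dotv; apply: cvgB; (try exact: cvg_fst); exact: cvg_cst.
  - by apply: cvg_dotv; exact: cvg_snd.
have := compact_bounded (continuous_compact (@continuous_subspaceT _ _ K phi cphi) cK).
move=> /pinfty_ex_gt0 [B B0 HB]; exists B; split => // p Kp.
have := HB (phi p); rewrite /globally /= => /(_ (ex_intro2 _ _ p Kp erefl)).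
by move=> /(le_trans (ler_norm _)).
Qed.
End Misc.
Section DerHelp.
Context {R : realType} {n : nat}.
Implicit Types f g : R -> R.

Lemma dMf f g (x df dg : R) : is_derive x 1 f df -> is_derive x 1 g dg ->
  is_derive x (1:R) (fun s => f s * g s) (f x * dg + g x * df).
Proof. move=> hf hg; exact: (is_deriveM hf hg). Qed.

Lemma dDf f g (x df dg : R) : is_derive x 1 f df -> is_derive x 1 g dg ->
  is_derive x (1:R) (fun s => f s + g s) (df + dg).
Proof. move=> hf hg; exact: (is_deriveD hf hg). Qed.

Lemma dBf f g (x df dg : R) : is_derive x 1 f df -> is_derive x 1 g dg ->
  is_derive x (1:R) (fun s => f s - g s) (df - dg).
Proof. move=> hf hg; exact: (is_deriveB hf hg). Qed.

Lemma dcst (x a : R) : is_derive x (1:R) (fun _ => a) 0.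
Proof. exact: is_derive_cst. Qed.

Lemma did (x : R) : is_derive x (1:R) (fun s => s) 1.
Proof. exact: is_derive_id. Qed.

Lemma dvB (f : R -> 'rV[R]_n) (w : 'rV[R]_n) (x : R) D :
  is_derive x 1 f D -> is_derive x (1:R) (fun s => f s - w) D.
Proof.
move=> hf; have := is_deriveB hf (is_derive_cst w x 1); rewrite subr0; exact.
Qed.

End DerHelp.
Arguments dMf {R f g x df dg}.
Arguments dDf {R f g x df dg}.
Arguments dBf {R f g x df dg}.
Arguments dvB {R n f w x D}.
Lemma dexpk {R : realType} (k x : R) : is_derive x (1:R) (fun s => expR (- k * s)) (expR (- k * x) * (- k)).
Proof.
have h : is_derive x (1:R) (fun s => - k * s) (- k).
  have := dMf (dcst x (- k)) (did x); rewrite mulr1 mulr0 addr0; exact.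
exact: (is_derive1_comp (is_derive_expR _) h).
Qed.
Section Main.
Context {R : realType} {n : nat}
  (L : 'rV[R]_n -> R) (gradL : 'rV[R]_n -> 'rV[R]_n) (zs : 'rV[R]_n) (M zeta : R)
  (hgrad : is_gradient L gradL) (hconv : convex_fun L)
  (hM : 0 < M) (hlip : lipschitz_euclid gradL M) (hzeta : 0 < zeta).

Let c := zeta ^+ 2 / M.
Let Nn (w : 'rV[R]_n) := dotv w w.
Let g0 := gradL zs.
Let k := 1 + c + 4 * c * M ^+ 2.
Let k' := 2 * c * Nn g0.

Lemma c_gt0 : 0 < c.
Proof. by rewrite /c divr_gt0 // exprn_gt0. Qed.

Lemma lipN x y : Nn (gradL x - gradL y) <= M ^+ 2 * Nn (x - y).
Proof.
have h := hlip x y; rewrite /enorm in h.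
have := ler_pM (sqrtr_ge0 _) (sqrtr_ge0 _) h h.
by rewrite -!expr2 exprMn !sqr_sqrtr ?dotv_ge0.
Qed.

Lemma NG_bound (w : 'rV[R]_n) : Nn (gradL w) <= 2 * M ^+ 2 * Nn (w - zs) + 2 * Nn g0.
Proof.
have := dotvD_le (gradL w - g0) g0; rewrite subrK.
have := lipN w zs; rewrite -/g0 /Nn => h1 h2.
have : 2 * dotv (gradL w - gradL zs) (gradL w - gradL zs) <= 2 * (M ^+ 2 * dotv (w - zs) (w - zs)).
  by rewrite ler_pM2l.
lra.
Qed.

Lemma phase1_pt (x : R) (a b : 'rV[R]_n) : 0 <= x <= 1 ->
  dotv b (a - zs) + dotv (a - zs) b +
    (dotv (- (2 * dbar x) *: b - c *: gradL (a + betabar x *: b)) b +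
     dotv b (- (2 * dbar x) *: b - c *: gradL (a + betabar x *: b)))
    <= k * (Nn (a - zs) + Nn b + k').
Proof.
move=> /andP[x0 x1].
set G := gradL (a + betabar x *: b).
have c0 := c_gt0.
have db0 : 0 <= dbar x by rewrite /dbar divr_ge0 // mulr_ge0 // addr_ge0.
have bb : betabar x ^+ 2 <= 1.
  have hx : 0 < x + 2 by lra.
  have h1 : betabar x <= 1 by rewrite /betabar ler_pdivrMr //; lra.
  have h2 : -1 <= betabar x by rewrite /betabar ler_pdivlMr //; lra.
  have : 0 <= (1 - betabar x) * (1 + betabar x) by rewrite mulr_ge0 //; lra.
  rewrite expr2; lra.
set u := a - zs.
have yzs : a + betabar x *: b - zs = u + betabar x *: b.
  by rewrite /u addrAC.
have hN := NG_bound (a + betabar x *: b); rewrite yzs -/G in hN.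
have hu := dotvD_le u (betabar x *: b).
rewrite dotvZl dotvZr in hu.
have f1 := dotv_le u b.
have f2 : - (2 * dotv b G) <= dotv b b + dotv G G.
  by have := dotv_ge0 (b + G); rewrite dotvDl !dotvDr (dotvC G b); lra.
have nb := dotv_ge0 b. have nu := dotv_ge0 u.
have ng0 := dotv_ge0 g0.
have h3 : betabar x * (betabar x * dotv b b) <= dotv b b by rewrite mulrA -expr2 ler_piMl.
have hN2 : Nn G <= 2 * M ^+ 2 * (2 * Nn u + 2 * Nn b) + 2 * Nn g0.
  apply: (le_trans hN); rewrite lerD2r ler_pM2l ?mulr_gt0 ?exprn_gt0 //.
  rewrite /Nn; lra.
have hN3 : c * Nn G <= c * (2 * M ^+ 2 * (2 * Nn u + 2 * Nn b) + 2 * Nn g0).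
  by rewrite ler_pM2l.
have hdb : 0 <= dbar x * dotv b b by rewrite mulr_ge0.
have hk : 0 <= (k - 1) * k'.
  apply: mulr_ge0; last by apply: mulr_ge0; [apply: mulr_ge0 => //; exact: ltW | exact: dotv_ge0].
  have : 0 <= c * M ^+ 2 by apply: mulr_ge0; [exact: ltW | apply: exprn_ge0; exact: ltW].
  rewrite /k; lra.
have e1 : dotv (- (2 * dbar x) *: b - c *: G) b = - (2 * dbar x) * Nn b - c * dotv b G.
  by rewrite dotvBl !dotvZl (dotvC G b).
have e2 : dotv b (- (2 * dbar x) *: b - c *: G) = - (2 * dbar x) * Nn b - c * dotv b G.
  by rewrite dotvC e1.
rewrite e1 e2 (dotvC b u).
have f2c : c * (- (2 * dotv b G)) <= c * (dotv b b + dotv G G).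
  by rewrite ler_pM2l //; lra.
have cnu : 0 <= c * dotv u u by rewrite mulr_ge0 // ltW.
rewrite /k /k' /Nn in hk *; rewrite /Nn in hN3.
lra.
Qed.
Lemma phase2_pt (x : R) (a b : 'rV[R]_n) : 1 < x ->
  c * (x + 2) / 2 * ((L a - L zs) + (x + 2) / 2 * dotv (gradL a) b
     - dotv (a - zs) (gradL (a + betabar x *: b))
     - (x + 2) / 2 * dotv b (gradL (a + betabar x *: b))) <= 0.
Proof.
move=> x1.
set bt := betabar x; set y := a + bt *: b; set G := gradL y.
have hx : 0 < x + 2 by lra.
have bt0 : 0 < bt by rewrite /bt /betabar divr_gt0 //; lra.
have bt1 : bt < 1 by rewrite /bt /betabar ltr_pdivrMr //; lra.
have i1 := @grad_ineq _ _ L gradL hgrad hconv y zs.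
have i2 := @grad_ineq _ _ L gradL hgrad hconv a y.
have i3 := @grad_mono _ _ L gradL hgrad hconv a y.
have e1 : zs - y = - ((a - zs) + bt *: b) by rewrite -[zs - y]opprB /y addrAC.
have e2 : y - a = bt *: b by rewrite /y addrAC subrr add0r.
have e3 : a - y = - (bt *: b) by rewrite -e2 opprB.
rewrite e1 dotvNr dotvDr dotvZr -/G in i1.
rewrite e2 dotvZr in i2.
rewrite e3 dotvNr dotvZr dotvBl -/G in i3.
have i4 : dotv (gradL a) b - dotv G b <= 0.
  have : bt * (dotv (gradL a) b - dotv G b) <= 0 by lra.
  by rewrite pmulr_rle0.
have i5 : ((x + 2) / 2 - bt) * (dotv (gradL a) b - dotv G b) <= 0.
  apply: mulr_ge0_le0 => //; rewrite subr_ge0; apply: ltW; apply: lt_trans bt1 _; rewrite ltr_pdivlMr // mul1r; lra.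
apply: mulr_ge0_le0; first by rewrite divr_ge0 // mulr_ge0 // ?ltW // c_gt0.
rewrite (dotvC b G) (dotvC (a - zs) G); lra.
Qed.
Lemma sol_derivs {T : \bar R} {z1 z2 tau} : is_sol gradL zeta M T z1 z2 tau -> tau 0 = 0 ->
  forall x, 0 < x -> (x%:E < T)%E ->
  [/\ is_derive x 1 z1 (z2 x),
      is_derive x 1 z2 (- (2 * dbar x) *: z2 x - c *: gradL (z1 x + betabar x *: z2 x))
    & tau x = x].
Proof.
case=> T0 [tpos [[c1 c2 c3] der]] t00.
have tid : forall t, 0 <= t -> (t%:E < T)%E -> tau t = t.
  apply: (@tau_id _ tau T t00 c3) => t t0 tT; by case: (der t t0 tT).
move=> x x0 xT; have tx := tid x (ltW x0) xT.
by case: (der x x0 xT); rewrite tx.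
Qed.

Lemma sol_lim0 {T : \bar R} {z1 z2 tau} : is_sol gradL zeta M T z1 z2 tau ->
  z1 s @[s --> 0^'+] --> z1 0 /\ z2 s @[s --> 0^'+] --> z2 0.
Proof. by case=> _ [_ [[c1 c2 _] _]]. Qed.

Lemma phase1 (T : \bar R) z1 z2 tau : is_sol gradL zeta M T z1 z2 tau -> tau 0 = 0 ->
  (1%:E < T)%E ->
  Nn (z1 1 - zs) + Nn (z2 1) + k' <= (Nn (z1 0 - zs) + Nn (z2 0) + k') * expR k.
Proof.
move=> sol t00 T1.
have ds := sol_derivs sol t00.
have [l1 l2] := sol_lim0 sol.
pose H s := Nn (z1 s - zs) + Nn (z2 s) + k'.
pose D2 x := - (2 * dbar x) *: z2 x - c *: gradL (z1 x + betabar x *: z2 x).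
pose Hd x := dotv (z2 x) (z1 x - zs) + dotv (z1 x - zs) (z2 x) +
   (dotv (D2 x) (z2 x) + dotv (z2 x) (D2 x)) + 0.
pose F s := H s * expR (- k * s).
pose Fd x := H x * (expR (- k * x) * (- k)) + expR (- k * x) * Hd x.
have dF : forall x : R, 0 < x <= 1 -> is_derive x (1:R) F (Fd x).
  move=> x /andP[x0 x1].
  have xT : (x%:E < T)%E by apply: le_lt_trans T1; rewrite lee_fin.
  have [d1 d2 _] := ds x x0 xT.
  have du := @dvB _ _ z1 zs x _ d1.
  have dH := dDf (dDf (is_derive_dotv du du) (is_derive_dotv d2 d2)) (dcst x k').
  exact: (dMf dH (dexpk k x)).
have lim : F s @[s --> 0^'+] --> F 0.
  apply: cvgM; last first.
    apply: continuous_cvg; first exact: continuous_expR.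
    apply: cvg_at_right_filter; apply: cvgM; [exact: cvg_cst | exact: cvg_id].
  apply: cvgD; last exact: cvg_cst.
  apply: cvgD; apply: cvg_dotv => //; apply: cvgB => //; exact: cvg_cst.
have Fle : forall x : R, 0 < x < 1 -> Fd x <= 0.
  move=> x /andP[x0 x1].
  have hx01 : 0 <= x <= 1 by rewrite !ltW.
  have hp := @phase1_pt x (z1 x) (z2 x) hx01.
  have -> : Fd x = expR (- k * x) * (Hd x - k * H x) by rewrite /Fd; ring.
  apply: mulr_ge0_le0; first exact: expR_ge0.
  rewrite /Hd /H /D2 addr0; lra.
have := @nonincr R F Fd 0 1 ltr01 lim dF Fle.
rewrite /F mulr0 expR0 mulr1 mulr1 => h.
have ek := expR_gt0 k.
rewrite -(ler_pM2r ek) -mulrA -expRD addNr expR0 mulr1 in h.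
exact: h.
Qed.
Definition Efun (T : \bar R) (z1 z2 : R -> 'rV[R]_n) (s : R) :=
  c / 4 * ((s + 2) * (s + 2)) * (L (z1 s) - L zs) + 1 / 2 * Nn (z1 s - zs)
  + (s + 2) / 2 * dotv (z1 s - zs) (z2 s) + (s + 2) * (s + 2) / 8 * Nn (z2 s).

Lemma phase2 (T : \bar R) z1 z2 tau : is_sol gradL zeta M T z1 z2 tau -> tau 0 = 0 ->
  forall t, 1 <= t -> (t%:E < T)%E -> Efun T z1 z2 t <= Efun T z1 z2 1.
Proof.
move=> sol t00 t; rewrite le_eqVlt => /predU1P[<- //|t1] tT.
have ds := sol_derivs sol t00.
pose Ed (x : R) := c * (x + 2) / 2 * ((L (z1 x) - L zs) + (x + 2) / 2 * dotv (gradL (z1 x)) (z2 x)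
     - dotv (z1 x - zs) (gradL (z1 x + betabar x *: z2 x))
     - (x + 2) / 2 * dotv (z2 x) (gradL (z1 x + betabar x *: z2 x))).
have dE : forall x : R, 0 < x -> (x%:E < T)%E -> is_derive x (1:R) (Efun T z1 z2) (Ed x).
  move=> x x0 xT.
  have [d1 d2 _] := ds x x0 xT.
  have du := @dvB _ _ z1 zs x _ d1.
  have dp1 := dDf (did x) (dcst x 2).
  have dp2 := dMf dp1 dp1.
  have dLz := @is_derive_Lcomp _ _ L gradL hgrad z1 x _ d1.
  have dLm := dBf dLz (dcst x (L zs)).
  have T1 := dMf (dMf (dcst x (c / 4)) dp2) dLm.
  have T2 := dMf (dcst x (1 / 2)) (is_derive_dotv du du).
  have T3 := dMf (dMf dp1 (dcst x (2^-1))) (is_derive_dotv du d2).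
  have T4 := dMf (dMf dp2 (dcst x (8^-1))) (is_derive_dotv d2 d2).
  have := dDf (dDf (dDf T1 T2) T3) T4.
  rewrite /Efun => H; apply: (is_derive_eq H).
  set G := gradL (z1 x + betabar x *: z2 x).
  set P := dotv (z1 x - zs) (z2 x).
  have eP : dotv (z2 x) (z1 x - zs) = P by rewrite dotvC.
  have eD1 : dotv (z1 x - zs) (- (2 * dbar x) *: z2 x - c *: G)
     = - (2 * dbar x) * P - c * dotv (z1 x - zs) G by rewrite dotvBr !dotvZr.
  have eD2 : dotv (z2 x) (- (2 * dbar x) *: z2 x - c *: G)
     = - (2 * dbar x) * Nn (z2 x) - c * dotv (z2 x) G by rewrite dotvBr !dotvZr.
  have eD3 : dotv (- (2 * dbar x) *: z2 x - c *: G) (z2 x)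
     = - (2 * dbar x) * Nn (z2 x) - c * dotv (z2 x) G by rewrite dotvC eD2.
  rewrite /Ed -/G eP eD1 eD2 eD3 /dbar /Nn.
  have hx : x + 2 != 0 by rewrite gt_eqF //; lra.
  field.
  exact: hx.
have xT : forall x, x <= t -> (x%:E < T)%E.
  by move=> x xt; apply: le_lt_trans tT; rewrite lee_fin.
have lim : Efun T z1 z2 s @[s --> 1^'+] --> Efun T z1 z2 1.
  apply: cvg_at_right_filter.
  have [dd _] := dE 1 ltr01 (xT 1 (ltW t1)).
  exact/differentiable_continuous/derivable1_diffP.
have dF : forall x : R, 1 < x <= t -> is_derive x (1:R) (Efun T z1 z2) (Ed x).
  move=> x /andP[x1 xt]; apply: dE; [exact: lt_trans x1 | exact: xT].
have Fle : forall x : R, 1 < x < t -> Ed x <= 0.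
  move=> x /andP[x1 _]; exact: phase2_pt.
exact: (@nonincr R _ Ed 1 t t1 lim dF Fle).
Qed.
Lemma Efun_lower (T : \bar R) z1 z2 t : 0 <= t ->
  c / 4 * ((t + 2) * (t + 2)) * (L (z1 t) - L zs) <= Efun T z1 z2 t.
Proof.
move=> t0; rewrite /Efun.
set u := z1 t - zs; set v := z2 t; set al := (t + 2) / 2.
clearbody u v.
have := dotv_ge0 (u + al *: v).
rewrite dotvDl !dotvDr !dotvZl !dotvZr ?(dotvC v u) /Nn /al.
lra.
Qed.

Lemma Efun1_bound (T : \bar R) z1 z2 :
  Efun T z1 z2 1 <= (9 / 4 * c * M ^+ 2 + 9 / 8 * c + 2) * (Nn (z1 1 - zs) + Nn (z2 1))
     + 9 / 4 * c * Nn g0.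
Proof.
rewrite /Efun.
set x1 := z1 1; set u := x1 - zs; set v := z2 1.
have gi := @grad_ineq _ _ L gradL hgrad hconv x1 zs.
rewrite -[zs - x1]opprB -/u dotvNr in gi.
have f1 := dotv_le (gradL x1) u.
have f2 := NG_bound x1; rewrite -/u in f2.
have f3 := dotv_le u v.
have c0 := c_gt0.
have h : c * (L x1 - L zs) <= c * (M ^+ 2 * Nn u + Nn g0 + Nn u / 2).
  rewrite ler_pM2l //; rewrite /Nn in f2 *; lra.
have nu := dotv_ge0 u; have nv := dotv_ge0 v.
have h2 : 0 <= c * M ^+ 2 * Nn v.
  by apply: mulr_ge0; [apply: mulr_ge0; [exact: ltW | apply: exprn_ge0; exact: ltW] | exact: dotv_ge0].
have h3 : 0 <= c * Nn v by apply: mulr_ge0; [exact: ltW | exact: dotv_ge0].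
rewrite /Nn in h h2 h3 *.
lra.
Qed.
Lemma main_sec (eps : R) : 0 < eps ->
  forall (K : set ('rV[R]_n * 'rV[R]_n)), compact K ->
  exists tstar : R, 0 < tstar /\
    forall (T : \bar R) (z1 z2 : R -> 'rV[R]_n) (tau : R -> R),
      is_maximal_sol gradL zeta M T z1 z2 tau ->
      K (z1 0, z2 0) -> tau 0 = 0 ->
      forall t : R, tstar <= t -> (t%:E < T)%E ->
        zeta ^+ 2 / M * (L (z1 t) - L zs) <= eps.
Proof.
move=> eps0 K cK.
have [B [B0 HB]] := @compact_bound R n K zs cK.
have c0 := c_gt0.
have k'0 : 0 <= k' by apply: mulr_ge0; [apply: mulr_ge0 => //; exact: ltW | exact: dotv_ge0].
set C1 := 9 / 4 * c * M ^+ 2 + 9 / 8 * c + 2.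
set C2 := 9 / 4 * c * Nn g0.
have C10 : 0 <= C1.
  have : 0 <= c * M ^+ 2 by apply: mulr_ge0; [exact: ltW | apply: exprn_ge0; exact: ltW].
  rewrite /C1; lra.
have C20 : 0 <= C2.
  have : 0 <= c * Nn g0 by apply: mulr_ge0; [exact: ltW | exact: dotv_ge0].
  rewrite /C2; lra.
set Cst := C1 * ((B + k') * expR k) + C2.
have Cst0 : 0 <= Cst.
  rewrite /Cst; apply: addr_ge0 => //; apply: mulr_ge0 => //.
  apply: mulr_ge0; [lra | exact: expR_ge0].
exists (1 + 4 * Cst / eps); split.
  have : 0 <= 4 * Cst / eps by rewrite divr_ge0 // ?mulr_ge0 // ltW.
  lra.
move=> T z1 z2 tau [sol _] Kz t00 t tt tT.
have t1 : 1 <= t.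
  have : 0 <= 4 * Cst / eps by rewrite divr_ge0 // ?mulr_ge0 // ltW.
  lra.
have T1 : (1%:E < T)%E by apply: le_lt_trans tT; rewrite lee_fin.
have p1 := @phase1 T z1 z2 tau sol t00 T1.
have hb := HB _ Kz; rewrite /= in hb.
have p1' : Nn (z1 1 - zs) + Nn (z2 1) <= (B + k') * expR k.
  have hH0 : (Nn (z1 0 - zs) + Nn (z2 0) + k') * expR k <= (B + k') * expR k.
    rewrite ler_pM2r ?expR_gt0 // /Nn; lra.
  lra.
have e1 := Efun1_bound T z1 z2.
have e1' : Efun T z1 z2 1 <= Cst.
  apply: (le_trans e1); rewrite /Cst lerD2r -/C1; apply: ler_wpM2l => //.
have p2 := @phase2 T z1 z2 tau sol t00 t t1 tT.
have lo := @Efun_lower T z1 z2 t (le_trans ler01 t1).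
set Q := zeta ^+ 2 / M * (L (z1 t) - L zs).
have hQ : Q * ((t + 2) * (t + 2)) <= 4 * Cst.
  have : c / 4 * ((t + 2) * (t + 2)) * (L (z1 t) - L zs) <= Cst.
    exact: le_trans lo (le_trans p2 e1').
  rewrite /Q -/c; lra.
have h4 : 4 * Cst <= eps * (t - 1).
  have : 4 * Cst / eps <= t - 1 by lra.
  by rewrite ler_pdivrMr // => h; lra.
have h5 : eps * (t - 1) <= eps * ((t + 2) * (t + 2)).
  by rewrite ler_pM2l //; nra.
have S0 : 0 < (t + 2) * (t + 2) by apply: mulr_gt0; lra.
by rewrite -(ler_pM2r S0); apply: le_trans hQ (le_trans h4 h5).
Qed.
End Main.
Theorem proposition5p6 (R : realType) (n : nat)
  (L : 'rV[R]_n -> R) (gradL : 'rV[R]_n -> 'rV[R]_n) (zs : 'rV[R]_n) (M zeta : R)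
  (hgrad : is_gradient L gradL) (hC1 : continuous gradL)
  (hconv : convex_fun L) (hmin : unique_minimizer L zs)
  (hM : 0 < M) (hlip : lipschitz_euclid gradL M) (hzeta : 0 < zeta) :
  forall (eps : R), 0 < eps ->
  forall (K : set ('rV[R]_n * 'rV[R]_n)), compact K ->
  exists tstar : R, 0 < tstar /\
    forall (T : \bar R) (z1 z2 : R -> 'rV[R]_n) (tau : R -> R),
      is_maximal_sol gradL zeta M T z1 z2 tau ->
      K (z1 0, z2 0) -> tau 0 = 0 ->
      forall t : R, tstar <= t -> (t%:E < T)%E ->
        zeta ^+ 2 / M * (L (z1 t) - L zs) <= eps.
Proof.
move=> eps e0 K cK.
exact (main_sec L gradL zs M zeta hgrad hconv hM hlip hzeta eps e0 K cK).
Qed.
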